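(* Let $\Sigma$ be a ranked set (arities $\ge1$) and $L\subseteq\mathsf{V}_1\Sigma$. The following are equivalent: (1) $L$ is recognised by a $\mathsf{V}$-algebra that is finite on every arity; (2) $L$ is recognised by (is a union of classes of) a congruence of the algebra $\mathsf{V}\Sigma$ with finitely many equivalence classes on every arity; (3) $L$ is VR-recognisable, i.e. there is an equivalence relation on $\mathsf{V}\Sigma$ of which $L$ is a union of classes, which has finitely many classes on every arity and is compatible with all VR-operations.
   Context: Here a ranked set is a set whose elements have arities in $\{1,2,\dots\}$; morphisms are arity-preserving. A corner of a ranked set $V$ is $v[i]$ with $v\in V$, $1\le i\le$ arity of $v$. For $n\ge1$, an $n$-ary $\mathsf{V}$-hypergraph with ports over $\Sigma$ consists of a nonempty finite ranked set of hypervertices, an arity-preserving labelling by $\Sigma$, a binary (directed) edge relation on corners, and a (total, not necessarily surjective) port function from corners to $\{1,\dots,n\}$ (corners mapped to $i$ are $i$-ports). $\mathsf{V}\Sigma$ is the ranked set of these up to isomorphism; $\mathsf{V}_1\Sigma$ its arity-1 part. $\mathsf{V}f$ relabels. The unit of an $n$-ary $a$ has one hypervertex $v$ labelled $a$, no edges, $v[i]$ an $i$-port. Flattening of $G\in\mathsf{V}\mathsf{V}\Sigma$: hypervertices are pairs $(v,w)$ with $v$ a hypervertex of $G$ and $w$ a hypervertex of the label of $v$ (label and arity from $w$); the arity is that of $G$; if $w[i]$ is a $j$-port in the label of $v$ and $v[j]$ is a $k$-port in $G$ then $(v,w)[i]$ is a $k$-port; there is an edge $(v,w)[i]\to(v',w')[i']$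 iff either $v=v'$ and $w[i]\to w'[i']$ in the label of $v$, or $v[j]\to v'[j']$ in $G$, where $j$ ($j'$) is the port number of $w[i]$ in the label of $v$ (of $w'[i']$ in the label of $v'$). A $\mathsf{V}$-algebra is a ranked set $A$ with arity-preserving $\pi:\mathsf{V}A\to A$, $\pi(\mathrm{unit}\,a)=a$, $\pi\circ\mathsf{V}\pi=\pi\circ\mathrm{flatten}$; homomorphisms commute with products; $\mathsf{V}\Sigma$ is an algebra with flattening. $L$ is recognised by $\mathcal{A}$ if $L=h^{-1}(F)\cap\mathsf{V}_1\Sigma$ for a homomorphism $h:\mathsf{V}\Sigma\to\mathcal{A}$ and set $F$. A polynomial operation with variables a ranked set $X$ is given by $t\in\mathsf{V}(\mathsf{V}\Sigma+X)$ and maps arity-preserving $\eta:X\to\mathsf{V}\Sigma$ to the flattening of $t$ with each label $x$ replaced by $\eta(x)$. A congruence is an equivalence relation compatible with all polynomial operations (componentwise equivalent inputs give equivalent outputs). VR-operations: for each $n$, disjoint union of two $n$-ary elements (ports kept); a constant for each unit; for each $f:\{1,\dots,n\}\to\{1,\dots,m\}$, the operation turning an $n$-ary element into an $m$-ary one by composing the port function with $f$; for each $E\subseteq\{1,\dots,n\}^2$, the operation adding directed edges from every $i$-port to every $j$-port for all $(i,j)\in E$. *)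

(* Defs.v *)
From Stdlib Require List.
From mathcomp Require Import all_boot.
Set Implicit Arguments. Unset Strict Implicit. Unset Printing Implicit Defensive.

(* Conventions: hypervertices of a hypergraph are the ordinals
   'I_nv; the corner v[i] of the paper is encoded as (v, i-1) with
   0 <= i-1 < arv v; port numbers 1..n of the paper are encoded as 0..n-1.
   Edges and ports are stored as total functions on nat indices; only the
   values on valid corners are meaningful (edges are required, by wf, to
   vanish outside valid corners). *)

Record hg (X : Type) : Type := HG {
  nv   : nat;
  ari  : nat;
  arv  : 'I_nv -> nat;
  lab  : 'I_nv -> X;
  edge : 'I_nv -> nat -> 'I_nv -> nat -> bool;
  port : 'I_nv -> nat -> nat
}.
Arguments nv {X} h. Arguments ari {X} h. Arguments arv {X} h _.
Arguments lab {X} h _. Arguments edge {X} h _ _ _ _. Arguments port {X} h _ _.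

Definition wf (X : Type) (arX : X -> nat) (P : X -> Prop) (G : hg X) : Prop :=
  0 < nv G /\
  (forall v, arX (lab G v) = arv G v /\ P (lab G v)) /\
  (forall v i, i < arv G v -> port G v i < ari G) /\
  (forall v i w j, edge G v i w j -> i < arv G v /\ j < arv G w).

Definition wfV (X : Type) (arX : X -> nat) (G : hg X) : Prop :=
  wf arX (fun _ => True) G.

Definition wfVV (X : Type) (arX : X -> nat) (G : hg (hg X)) : Prop :=
  wf (@ari X) (wfV arX) G.

(* isomorphism of hypergraphs (V X is the set of these up to isomorphism) *)
Definition hiso (X : Type) (G H : hg X) : Prop :=
  ari G = ari H /\
  exists phi : 'I_(nv G) -> 'I_(nv H), bijective phi /\
    forall v, lab H (phi v) = lab G v /\ arv H (phi v) = arv G v /\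
      (forall i, i < arv G v -> port H (phi v) i = port G v i) /\
      (forall i w j, edge H (phi v) i (phi w) j = edge G v i w j).

Definition hunit (X : Type) (arX : X -> nat) (a : X) : hg X :=
  @HG X 1 (arX a) (fun _ => arX a) (fun _ => a) (fun _ _ _ _ => false)
      (fun _ i => i).

Definition Vmap (X Y : Type) (f : X -> Y) (G : hg X) : hg Y :=
  @HG Y (nv G) (ari G) (arv G) (fun v => f (lab G v)) (edge G) (port G).

(* F is (a representative of) the flattening of G *)
Definition is_flat (X : Type) (G : hg (hg X)) (F : hg X) : Prop :=
  ari F = ari G /\
  exists phi : 'I_(nv F) -> {v : 'I_(nv G) & 'I_(nv (lab G v))},
    bijective phi /\
    forall k : 'I_(nv F),
      lab F k = lab (lab G (tag (phi k))) (tagged (phi k)) /\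
      arv F k = arv (lab G (tag (phi k))) (tagged (phi k)) /\
      (forall i, i < arv F k ->
         port F k i = port G (tag (phi k))
                              (port (lab G (tag (phi k))) (tagged (phi k)) i)) /\
      (forall i k' j, i < arv F k -> j < arv F k' ->
         (edge F k i k' j <->
           (exists (v : 'I_(nv G)) (w w' : 'I_(nv (lab G v))),
               phi k = Tagged (fun v => 'I_(nv (lab G v))) w /\
               phi k' = Tagged (fun v => 'I_(nv (lab G v))) w' /\
               edge (lab G v) w i w' j)
           \/ edge G (tag (phi k))
                     (port (lab G (tag (phi k))) (tagged (phi k)) i)
                     (tag (phi k'))
                     (port (lab G (tag (phi k'))) (tagged (phi k')) j))).

Definition ranked (A : Type) (arA : A -> nat) : Prop := forall a, 0 < arA a.

Definition finite_on_arities (A : Type) (arA : A -> nat) : Prop :=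
  forall n, exists s : list A, forall a, arA a = n -> List.In a s.

Definition is_Valg (A : Type) (arA : A -> nat) (pi : hg A -> A) : Prop :=
  (forall G, wfV arA G -> arA (pi G) = ari G) /\
  (forall G H, wfV arA G -> wfV arA H -> hiso G H -> pi G = pi H) /\
  (forall a, pi (hunit arA a) = a) /\
  (forall (G : hg (hg A)) (F : hg A), wfVV arA G -> wfV arA F -> is_flat G F ->
     pi (Vmap pi G) = pi F).

Definition is_hom (S : Type) (arS : S -> nat) (A : Type) (arA : A -> nat)
    (pi : hg A -> A) (h : hg S -> A) : Prop :=
  (forall G, wfV arS G -> arA (h G) = ari G) /\
  (forall G H, wfV arS G -> wfV arS H -> hiso G H -> h G = h H) /\
  (forall (G : hg (hg S)) (F : hg S), wfVV arS G -> wfV arS F -> is_flat G F ->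
     h F = pi (Vmap h G)).

Definition rec_by_finite_algebra (S : Type) (arS : S -> nat) (L : hg S -> Prop)
  : Prop :=
  exists (A : Type) (arA : A -> nat) (pi : hg A -> A),
    ranked arA /\ finite_on_arities arA /\ is_Valg arA pi /\
    exists (h : hg S -> A) (F : A -> Prop),
      is_hom arS arA pi h /\
      forall G, wfV arS G -> ari G = 1 -> (L G <-> F (h G)).

Definition equiv_VS (S : Type) (arS : S -> nat) (R : hg S -> hg S -> Prop)
  : Prop :=
  (forall G, wfV arS G -> R G G) /\
  (forall G H, R G H -> R H G) /\
  (forall G H K, R G H -> R H K -> R G K) /\
  (forall G H, R G H -> wfV arS G /\ wfV arS H /\ ari G = ari H) /\
  (forall G H, wfV arS G -> wfV arS H -> hiso G H -> R G H).

Definition finite_index (S : Type) (arS : S -> nat) (R : hg S -> hg S -> Prop)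
  : Prop :=
  forall n, exists s : list (hg S),
    forall G, wfV arS G -> ari G = n -> exists H, List.In H s /\ R G H.

Definition union_of_classes (S : Type) (arS : S -> nat)
    (R : hg S -> hg S -> Prop) (L : hg S -> Prop) : Prop :=
  forall G H, wfV arS G -> wfV arS H -> ari G = 1 -> R G H -> L G -> L H.

Definition sum_ar (S Xv : Type) (arXv : Xv -> nat) (l : hg S + Xv) : nat :=
  match l with inl g => ari g | inr x => arXv x end.

Definition sum_ok (S Xv : Type) (arS : S -> nat) (l : hg S + Xv) : Prop :=
  match l with inl g => wfV arS g | inr _ => True end.

Definition psubst (S Xv : Type) (eta : Xv -> hg S) (t : hg (hg S + Xv))
  : hg (hg S) :=
  Vmap (fun l => match l with inl g => g | inr x => eta x end) t.

Definition congruence (S : Type) (arS : S -> nat) (R : hg S -> hg S -> Prop)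
  : Prop :=
  equiv_VS arS R /\
  forall (Xv : Type) (arXv : Xv -> nat), ranked arXv ->
  forall t : hg (hg S + Xv), wf (sum_ar arXv) (sum_ok arS) t ->
  forall eta eta' : Xv -> hg S,
    (forall x, wfV arS (eta x) /\ ari (eta x) = arXv x) ->
    (forall x, wfV arS (eta' x) /\ ari (eta' x) = arXv x) ->
    (forall x, R (eta x) (eta' x)) ->
    forall F F', wfV arS F -> wfV arS F' ->
      is_flat (psubst eta t) F -> is_flat (psubst eta' t) F' -> R F F'.

Definition rec_by_finite_congruence (S : Type) (arS : S -> nat)
    (L : hg S -> Prop) : Prop :=
  exists R, congruence arS R /\ finite_index arS R /\ union_of_classes arS R L.

Definition dunion (X : Type) (G H : hg X) : hg X :=
  @HG X (nv G + nv H) (ari G)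
    (fun k => match split k with inl v => arv G v | inr w => arv H w end)
    (fun k => match split k with inl v => lab G v | inr w => lab H w end)
    (fun k i k' j => match split k, split k' with
                     | inl v, inl v' => edge G v i v' j
                     | inr w, inr w' => edge H w i w' j
                     | _, _ => false end)
    (fun k i => match split k with inl v => port G v i | inr w => port H w i end).

Definition rename_ports (X : Type) (m : nat) (f : nat -> nat) (G : hg X) : hg X :=
  @HG X (nv G) m (arv G) (lab G) (edge G) (fun v i => f (port G v i)).

Definition add_edges (X : Type) (E : rel nat) (G : hg X) : hg X :=
  @HG X (nv G) (ari G) (arv G) (lab G)
    (fun v i w j => edge G v i w j ||
        [&& i < arv G v, j < arv G w & E (port G v i) (port G w j)])
    (port G).

Definition VR_compatible (S : Type) (arS : S -> nat) (R : hg S -> hg S -> Prop)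
  : Prop :=
  (forall G G' H H', ari G = ari H -> R G G' -> R H H' ->
     R (dunion G H) (dunion G' H')) /\
  (forall n m (f : nat -> nat), 0 < n -> (forall i, i < n -> f i < m) ->
     forall G G', ari G = n -> R G G' ->
       R (rename_ports m f G) (rename_ports m f G')) /\
  (forall n (E : rel nat), 0 < n ->
     (forall i j, E i j -> i < n /\ j < n) ->
     forall G G', ari G = n -> R G G' -> R (add_edges E G) (add_edges E G')).

Definition VR_recognisable (S : Type) (arS : S -> nat) (L : hg S -> Prop)
  : Prop :=
  exists R, equiv_VS arS R /\ VR_compatible arS R /\ finite_index arS R /\
            union_of_classes arS R L.

(* Main.v *)
Require Import Defs.
From mathcomp Require Import all_boot zify.
From Stdlib Require Import ClassicalEpsilon Classical FunctionalExtensionality PropExtensionality ProofIrrelevance Eqdep_dec.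
Set Implicit Arguments. Unset Strict Implicit. Unset Printing Implicit Defensive.

Lemma ord_eq_dec n : forall a b : 'I_n, {a = b} + {a <> b}.
Proof. move=> a b; exact: (decP eqP). Qed.

Lemma existT_tag n (P : 'I_n -> Type) a b (x : P a) (y : P b) :
  existT P a x = existT P b y -> a = b.
Proof. by move/(congr1 (@projT1 _ _)). Qed.

Lemma existT_inj n (P : 'I_n -> Type) a (x y : P a) :
  existT P a x = existT P a y -> x = y.
Proof. apply: inj_pair2_eq_dec; exact: ord_eq_dec. Qed.
Arguments existT_inj {n P a x y} _.
Arguments existT_tag {n P a b x y} _.

Lemma tagged_eqP n (P : 'I_n -> nat) (p q : {v : 'I_n & 'I_(P v)}) :
  tag p = tag q -> val (tagged p) = val (tagged q) -> p = q.
Proof.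
case: p q => v w [v' w'] /= e; subst v' => e; congr existT; exact: val_inj.
Qed.

Notation sigG G := {v : 'I_(nv G) & 'I_(nv (lab G v))}.

Definition edge_at (X : Type) (g : hg X) (w : 'I_(nv g)) i (b : nat) j : bool :=
  if (insub b : option 'I_(nv g)) is Some w' then edge g w i w' j else false.

Lemma edge_at_val X (g : hg X) (w w' : 'I_(nv g)) i j :
  edge_at w i (val w') j = edge g w i w' j.
Proof. by rewrite /edge_at valK. Qed.

Lemma innerP X (G : hg (hg X)) (p p' : sigG G) i j :
  (exists v (w w' : 'I_(nv (lab G v))),
     p = Tagged (fun v => 'I_(nv (lab G v))) w /\
     p' = Tagged (fun v => 'I_(nv (lab G v))) w' /\ edge (lab G v) w i w' j)
  <-> (tag p == tag p') && edge_at (tagged p) i (val (tagged p')) j.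
Proof.
case: p p' => v w [v' w'] /=; split.
- move=> [u [x [x' [e1 [e2 E]]]]].
  have ev := existT_tag e1; have ev' := existT_tag e2; subst v v'.
  have := existT_inj e1; have := existT_inj e2 => -> ->.
  by rewrite eqxx edge_at_val.
- case/andP=> /eqP ev; subst v' => E.
  by exists v, w, w'; rewrite -edge_at_val.
Qed.

Definition flat (X : Type) (G : hg (hg X)) : hg X :=
  @HG X #|{: sigG G}| (ari G)
    (fun k => let p := enum_val k in arv (lab G (tag p)) (tagged p))
    (fun k => let p := enum_val k in lab (lab G (tag p)) (tagged p))
    (fun k i k' j => let p := enum_val k in let p' := enum_val k' in
        [&& i < arv (lab G (tag p)) (tagged p), j < arv (lab G (tag p')) (tagged p') &
         ((tag p == tag p') && edge_at (tagged p) i (val (tagged p')) j)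
         || edge G (tag p) (port (lab G (tag p)) (tagged p) i)
                   (tag p') (port (lab G (tag p')) (tagged p') j)])
    (fun k i => let p := enum_val k in port G (tag p) (port (lab G (tag p)) (tagged p) i)).

Lemma flat_is_flat X (G : hg (hg X)) : is_flat G (flat G).
Proof.
split; first by [].
exists enum_val; split; first exact: enum_val_bij.
move=> k; split; first by []; split; first by []; split; first by [].
move=> i k' j Hi Hj /=; rewrite Hi Hj /=; split.
- case/orP=> [/innerP|]; by [left|right].
- by case=> [/innerP ->|->] //; rewrite orbT.
Qed.

Lemma flat_wf X (arX : X -> nat) (G : hg (hg X)) : wfVV arX G -> wfV arX (flat G).
Proof.
case=> n0 [Hl [Hp He]].
split.
  have v0 : 'I_(nv G) := Ordinal n0.
  case: (Hl v0) => _ [n1 _].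
  apply/card_gt0P; exists (Tagged (fun v => 'I_(nv (lab G v))) (Ordinal n1)); by [].
split.
  move=> k /=; split => //; case: (Hl (tag (enum_val k))) => _ [_ [H _]]; exact: (H _).1.
split.
  move=> k i /= Hi; apply: Hp.
  case: (Hl (tag (enum_val k))) => <- [_ [_ [H _]]]; exact: H _ _ Hi.
by move=> k i k' j /= /and3P [].
Qed.

Lemma flat_unique X (arX : X -> nat) (G : hg (hg X)) F1 F2 :
  is_flat G F1 -> is_flat G F2 -> wfV arX F1 -> wfV arX F2 -> hiso F1 F2.
Proof.
case=> a1 [p1 [b1 H1]] [a2 [p2 [b2 H2]]] W1 W2.
have b2' := b2; case: b2' => g2 c2 d2.
split; first by rewrite a1 a2.
exists (g2 \o p1); split.
  apply: bij_comp => //; by exists p2.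
move=> v /=.
case: (H1 v) => l1 [ar1 [po1 ed1]].
case: (H2 (g2 (p1 v))) => l2 [ar2 [po2 ed2]].
rewrite d2 in l2 ar2 po2 ed2.
split; first by rewrite l2 l1.
split; first by rewrite ar2 ar1.
split.
  move=> i Hi; rewrite po2 ?po1 // ar2 -ar1 //.
move=> i w j.
case: (H1 w) => _ [arw1 _].
case: (H2 (g2 (p1 w))) => _ [arw2 _]; rewrite d2 in arw2.
case Hi: (i < arv F1 v); last first.
  case: W1 => _ [_ [_ E1]]; case: W2 => _ [_ [_ E2]].
  apply/idP/idP => [/E2 []|/E1 []]; last by rewrite Hi.
  by rewrite ar2 -ar1 Hi.
case Hj: (j < arv F1 w); last first.
  case: W1 => _ [_ [_ E1]]; case: W2 => _ [_ [_ E2]].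
  apply/idP/idP => [/E2 []|/E1 []]; last by rewrite Hj.
  by rewrite arw2 -arw1 Hj.
have Hi' : i < arv F2 (g2 (p1 v)) by rewrite ar2 -ar1.
have Hj' : j < arv F2 (g2 (p1 w)) by rewrite arw2 -arw1.
have := ed2 i (g2 (p1 w)) j Hi' Hj'; rewrite d2 => E2.
have E1 := ed1 i w j Hi Hj.
by apply/idP/idP => [/E2/E1|/E1/E2].
Qed.

Lemma hiso_refl X (g : hg X) : hiso g g.
Proof.
split => //; exists id; split; first by exists id.
by move=> v; split => //; split => //; split.
Qed.

Lemma unit_flat X (g g' : hg X) : hiso g g' -> is_flat (hunit (@ari X) g) g'.
Proof.
case=> a [f [bf Hf]]; case: (bf) => f' c d.
split; first by rewrite /= a.
exists (fun k => existT (fun v : 'I_1 => 'I_(nv g)) ord0 (f' k)); split.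
  exists (fun p => f (projT2 p)); first by move=> k /=; rewrite d.
  move=> p /=; rewrite c; case: p => v w /=; congr existT; apply/val_inj; by case: v {w} => [[]].
move=> k /=.
case: (Hf (f' k)) => l1 [ar1 [po1 ed1]]; rewrite d in l1 ar1 po1.
split; first by [].
split; first by [].
split; first by move=> i Hi; rewrite po1 // -ar1.
move=> i k' j Hi Hj; split.
  move=> E; left; exists ord0, (f' k), (f' k'); split => //; split => //.
  by rewrite /= -ed1 !d.
case=> [[v [w [w' [e1 [e2 E]]]]]|//].
have ev := existT_tag e1; subst v.
have ew := existT_inj e1; have ew' := existT_inj e2; subst w w'.
by move: E; rewrite /= -ed1 !d.
Qed.

Definition castv X (g1 g2 : hg X) (e : g1 = g2) (w : 'I_(nv g1)) : 'I_(nv g2) :=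
  cast_ord (congr1 nv e) w.

Lemma castv_val X (g1 g2 : hg X) (e : g1 = g2) w : val (castv e w) = val w.
Proof. by []. Qed.
Lemma castv_lab X (g1 g2 : hg X) (e : g1 = g2) w : lab g2 (castv e w) = lab g1 w.
Proof. by case: g2 / e; rewrite /castv cast_ord_id. Qed.
Lemma castv_arv X (g1 g2 : hg X) (e : g1 = g2) w : arv g2 (castv e w) = arv g1 w.
Proof. by case: g2 / e; rewrite /castv cast_ord_id. Qed.
Lemma castv_port X (g1 g2 : hg X) (e : g1 = g2) w i : port g2 (castv e w) i = port g1 w i.
Proof. by case: g2 / e; rewrite /castv cast_ord_id. Qed.
Lemma castv_edge_at X (g1 g2 : hg X) (e : g1 = g2) w i b j :
  edge_at (castv e w) i b j = edge_at w i b j.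
Proof. by case: g2 / e; rewrite /castv cast_ord_id. Qed.

Lemma existT_eqE n (P : 'I_n -> finType) v (w w' : P v) :
  (existT P v w == existT P v w') = (w == w').
Proof. by apply/eqP/eqP => [E|->]; [exact: (existT_inj E)|]. Qed.

Lemma card_sigO n (f : 'I_n -> nat) : #|{: {k : 'I_n & 'I_(f k)}}| = \sum_k f k.
Proof.
rewrite card_tagged sumnE big_map big_enum /=.
by under eq_bigr do rewrite card_ord.
Qed.

Lemma edge_clause X (G : hg (hg X)) (p p' : sigG G) i j (b top : bool) :
  b = (((tag p == tag p') && edge_at (tagged p) i (val (tagged p')) j) || top) ->
  (b <-> (exists v (w w' : 'I_(nv (lab G v))),
     p = Tagged (fun v => 'I_(nv (lab G v))) w /\
     p' = Tagged (fun v => 'I_(nv (lab G v))) w' /\ edge (lab G v) w i w' j) \/ top).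
Proof.
move=> ->; split.
- by case/orP=> [/innerP|]; [left|right].
- by case=> [/innerP ->|->] //; rewrite orbT.
Qed.

Lemma edge_clause_inv X (G : hg (hg X)) (p p' : sigG G) i j (b top : bool) :
  (b <-> (exists v (w w' : 'I_(nv (lab G v))),
     p = Tagged (fun v => 'I_(nv (lab G v))) w /\
     p' = Tagged (fun v => 'I_(nv (lab G v))) w' /\ edge (lab G v) w i w' j) \/ top) ->
  b = (((tag p == tag p') && edge_at (tagged p) i (val (tagged p')) j) || top).
Proof.
move=> H; apply/idP/idP.
- by move/H => [/innerP ->|->] //; rewrite orbT.
- by case/orP=> [/innerP|] => ?; apply/H; [left|right].
Qed.

Definition psiA X Y (m : X -> hg Y) (G : hg (hg X)) (F : hg X)
  (phi : 'I_(nv F) -> sigG G)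
  (el : forall k, lab F k = lab (lab G (tag (phi k))) (tagged (phi k)))
  (q : {k : 'I_(nv F) & 'I_(nv (m (lab F k)))}) :
  sigG (Vmap (fun g => flat (Vmap m g)) G) :=
  existT (fun v => 'I_(nv (flat (Vmap m (lab G v))))) (tag (phi (tag q)))
   (enum_rank (existT (fun w : 'I_(nv (lab G (tag (phi (tag q))))) =>
                         'I_(nv (m (lab (lab G (tag (phi (tag q)))) w))))
                (tagged (phi (tag q))) (castv (congr1 m (el (tag q))) (tagged q)))).

Lemma psiA_inj X Y (m : X -> hg Y) (G : hg (hg X)) (F : hg X)
  (phi : 'I_(nv F) -> sigG G) el : injective phi -> injective (@psiA X Y m G F phi el).
Proof.
move=> iphi [k1 u1] [k2 u2]; rewrite /psiA /=.
have Hinj : (k1 == k2) = (phi k1 == phi k2) by rewrite (inj_eq iphi).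
move: (el k1) (el k2) Hinj; case: (phi k1) => v1 w1; case: (phi k2) => v2 w2 /= e1 e2 Hinj E.
have ev := existT_tag E; subst v2.
have /enum_rank_inj E2 := existT_inj E.
have ew := existT_tag E2; subst w2.
have E3 := existT_inj E2.
move: Hinj; rewrite eqxx => /eqP ek; subst k2.
have -> : u1 = u2 by apply/val_inj; move: (congr1 val E3); rewrite !castv_val.
by [].
Qed.

Lemma psiA_card X Y (m : X -> hg Y) (G : hg (hg X)) (F : hg X)
  (phi : 'I_(nv F) -> sigG G)
  (el : forall k, lab F k = lab (lab G (tag (phi k))) (tagged (phi k))) :
  bijective phi ->
  #|{: sigG (Vmap (fun g => flat (Vmap m g)) G)}| <=
  #|{: {k : 'I_(nv F) & 'I_(nv (m (lab F k)))}}|.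
Proof.
move=> bphi.
rewrite !card_sigO /=.
under eq_bigr do rewrite card_sigO.
rewrite (sig_big_dep xpredT (fun _ => xpredT) (fun v w => nv (m (lab (lab G v) w)))) /=.
rewrite (reindex phi) /=; last exact: onW_bij.
by under eq_bigr do rewrite -el.
Qed.

Lemma flat_assoc X Y (arX : X -> nat) (arY : Y -> nat) (m : X -> hg Y)
  (G : hg (hg X)) (F : hg X) :
  (forall x, wfV arY (m x) /\ ari (m x) = arX x) -> wfV arX F ->
  is_flat G F -> is_flat (Vmap (fun g => flat (Vmap m g)) G) (flat (Vmap m F)).
Proof.
move=> Hm WF [a [phi [bphi Hphi]]].
have el : forall k, lab F k = lab (lab G (tag (phi k))) (tagged (phi k)) :=
  fun k => (Hphi k).1.
have bpsi : bijective (@psiA X Y m G F phi el).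
  apply: inj_card_bij; [apply: psiA_inj; exact: bij_inj | exact: psiA_card].
split; first by [].
exists (fun x => psiA el (enum_val x)); split.
  exact: bij_comp bpsi (enum_val_bij _).
move=> x.
have pb : forall k u i, i < arv (m (lab F k)) u -> port (m (lab F k)) u i < arv F k.
  move=> k u i Hi; case: (Hm (lab F k)) => [[_ [_ [Hp _]]] ea].
  case: WF => _ [Hl _]; rewrite -(Hl k).1 -ea; exact: Hp.
split.
  by rewrite /=; case: (enum_val x) => k u /=; rewrite enum_rankK /= castv_lab.
split.
  by rewrite /=; case: (enum_val x) => k u /=; rewrite enum_rankK /= castv_arv.
split.
  rewrite /=; case: (enum_val x) => k u /= i Hi; rewrite enum_rankK /= castv_port.
  case: (Hphi k) => _ [_ [Hpo _]]; rewrite Hpo //; exact: (pb _ _ _ Hi).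
move=> i x' j Hi Hj; apply: edge_clause; move: Hi Hj; rewrite /=.
case: (enum_val x) => k u; case: (enum_val x') => k' u' /= Hi Hj.
rewrite !enum_rankK /= !castv_port Hi Hj /=.
have pbi := pb _ _ _ Hi; have pbj := pb _ _ _ Hj.
case: (Hphi k) => _ [_ [_ Hed]].
rewrite (edge_clause_inv (Hed _ _ _ pbi pbj)).
have Hinj : (k == k') = (phi k == phi k') by rewrite (inj_eq (bij_inj bphi)).
move: Hinj (el k) (el k'); case: (phi k) => v w; case: (phi k') => v' w' /= Hinj e e'.
case: (eqVneq v v') => [ev|nev]; last first.
  rewrite Hinj.
  have -> : (existT (fun v => 'I_(nv (lab G v))) v w == existT _ v' w') = false.
    by apply/negbTE/eqP => E; move: nev; rewrite (existT_tag E) eqxx.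
  by [].
subst v'; rewrite !edge_at_val /= !enum_rankK /= Hinj existT_eqE.
by rewrite !castv_arv Hi Hj /= !castv_port castv_edge_at orbA.
Qed.

Definition code (B v j : nat) := v * B + j.

Lemma code_div B v j : j < B -> code B v j %/ B = v.
Proof. move=> jB; rewrite /code divnMDl ?divn_small ?addn0 //; lia. Qed.
Lemma code_mod B v j : j < B -> code B v j %% B = j.
Proof. move=> jB; rewrite /code modnMDl modn_small //. Qed.
Lemma code_inj B v j v' j' : j < B -> j' < B -> code B v j = code B v' j' -> v = v' /\ j = j'.
Proof.
move=> jB jB' e; split; first by rewrite -(code_div v jB) e code_div.
by rewrite -(code_mod v jB) e code_mod.
Qed.

Lemma split_lsh m n (w : 'I_m) : split (lshift n w) = inl w.
Proof. exact: (unsplitK (inl w)). Qed.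
Lemma split_rsh m n (w : 'I_n) : split (rshift m w) = inr w.
Proof. exact: (unsplitK (inr w)). Qed.

Unset Implicit Arguments.
Definition comp X (G : hg (hg X)) M B (v : 'I_(nv G)) : hg X :=
  rename_ports M (code B v) (lab G v).

Fixpoint Ulist X (G : hg (hg X)) M B (v : 'I_(nv G)) (s : seq 'I_(nv G)) : hg X :=
  match s with
  | [::] => comp X G M B v
  | v' :: s' => dunion (comp X G M B v) (Ulist X G M B v' s')
  end.
Arguments comp {X} G M B v.
Arguments Ulist {X} G M B v s.
Set Implicit Arguments.

Lemma Ulist_ari X (G : hg (hg X)) M B v s : ari (Ulist G M B v s) = M.
Proof. by case: s. Qed.

Lemma Ulist_rep X (G : hg (hg X)) M B v s : uniq (v :: s) ->
  exists f : 'I_(nv (Ulist G M B v s)) -> sigG G,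
   [/\ injective f, (forall p, tag p \in v :: s -> exists k, f k = p),
       (forall k, tag (f k) \in v :: s) &
   forall k, [/\ lab (Ulist G M B v s) k = lab (lab G (tag (f k))) (tagged (f k)),
     arv (Ulist G M B v s) k = arv (lab G (tag (f k))) (tagged (f k)),
     (forall i, port (Ulist G M B v s) k i =
        code B (tag (f k)) (port (lab G (tag (f k))) (tagged (f k)) i)) &
     (forall i k' j, edge (Ulist G M B v s) k i k' j =
        (tag (f k) == tag (f k')) && edge_at (tagged (f k)) i (val (tagged (f k'))) j)]].
Proof.
elim: s v => [|v' s IH] v Hu.
  exists (fun w => existT (fun v => 'I_(nv (lab G v))) v w); split.
  - by move=> w w' /existT_inj.
  - case=> u w /=; rewrite inE => /eqP eu; subst u; by exists w.
  - by move=> k; rewrite /= inE.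
  - move=> k; split => //= i k' j; by rewrite eqxx edge_at_val.
have Hu' : uniq (v' :: s) by case/andP: Hu.
have nv_s : v \notin v' :: s by case/andP: Hu.
case: (IH v' Hu') => f' [fi fc ft fp].
pose f := fun k : 'I_(nv (Ulist G M B v (v' :: s))) =>
  match split k with
  | inl w => existT (fun v => 'I_(nv (lab G v))) v w
  | inr k' => f' k' end.
have tagne : forall k', tag (f' k') != v.
  by move=> k'; apply/eqP => e; move: nv_s; rewrite -e ft.
exists f; split.
- move=> k1 k2; rewrite /f -[k1]splitK -[k2]splitK.
  case: (split k1) => [w1|k1']; case: (split k2) => [w2|k2']; rewrite !unsplitK.
  + by move/existT_inj => ->.
  + by move=> e; move: (tagne k2'); rewrite -e eqxx.
  + by move=> e; move: (tagne k1'); rewrite e eqxx.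
  + by move/fi => ->.
- case=> u w; rewrite inE /= => /orP [/eqP eu|us].
    subst u; exists (unsplit (inl w)); by rewrite /f unsplitK.
  case: (fc (existT _ u w) us) => k' ek; exists (unsplit (inr k')); by rewrite /f unsplitK.
- move=> k; rewrite /f; case: (split k) => [w|k']; first by rewrite inE eqxx.
  by rewrite inE ft orbT.
- move=> k; rewrite /f -[k]splitK; case: (split k) => [w|k'] /=; rewrite ?split_lsh ?split_rsh /=.
  + split => // i k2 j; rewrite -[k2]splitK; case: (split k2) => [w2|k2'];
      rewrite /= ?split_lsh ?split_rsh /=.
      by rewrite eqxx edge_at_val.
    by rewrite eq_sym (negbTE (tagne k2')).
  + case: (fp k') => l1 a1 p1 e1; split => // i k2 j.
    rewrite -[k2]splitK; case: (split k2) => [w2|k2'];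
      rewrite /= ?split_lsh ?split_rsh /=.
      by rewrite (negbTE (tagne k')).
    by rewrite e1.
Qed.

Definition Bm X (G : hg X) := \max_(u < nv G) arv G u.
Definition Edef X (G : hg X) (B : nat) : rel nat := fun a b =>
  [exists v : 'I_(nv G), exists v' : 'I_(nv G), exists j : 'I_B, exists j' : 'I_B,
     [&& a == code B v j, b == code B v' j' & edge G v j v' j']].
Definition dec X (G : hg X) B a :=
  if (insub (a %/ B) : option 'I_(nv G)) is Some v then
    (if a %% B < arv G v then port G v (a %% B) else 0) else 0.
Definition final X (G : hg (hg X)) v s :=
  rename_ports (ari G) (dec G (Bm G))
    (add_edges (Edef G (Bm G)) (Ulist G (nv G * Bm G) (Bm G) v s)).
Arguments final {X} G v s.

Lemma Bm_ge X (G : hg X) u : arv G u <= Bm G.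
Proof. by rewrite /Bm (bigD1 u) //= leq_maxl. Qed.

Lemma code_lt B n v j : v < n -> j < B -> code B v j < n * B.
Proof. rewrite /code => *; nia. Qed.

Lemma Edef_code X (G : hg X) B (v v' : 'I_(nv G)) j j' : j < B -> j' < B ->
  Edef G B (code B v j) (code B v' j') = edge G v j v' j'.
Proof.
move=> jB jB'; apply/existsP/idP.
  case=> v1 /existsP [v1' /existsP [j1 /existsP [j1' /and3P [/eqP e1 /eqP e2 E]]]].
  case: (code_inj jB (ltn_ord j1) e1) => /val_inj ev ej.
  case: (code_inj jB' (ltn_ord j1') e2) => /val_inj ev' ej'.
  by subst.
move=> E; exists v; apply/existsP; exists v'; apply/existsP; exists (Ordinal jB).
apply/existsP; exists (Ordinal jB'); by rewrite !eqxx E.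
Qed.

Lemma Edef_bound X (G : hg X) B a b : Edef G B a b -> a < nv G * B /\ b < nv G * B.
Proof.
case/existsP=> v /existsP [v' /existsP [j /existsP [j' /and3P [/eqP -> /eqP -> _]]]].
by split; apply: code_lt.
Qed.

Lemma Edef_false X (G : hg X) B a b :
  (forall v j v' j', edge G v j v' j' = false) -> Edef G B a b = false.
Proof.
move=> H; apply/negbTE/existsP.
by case=> v /existsP [v' /existsP [j /existsP [j' /and3P [_ _]]]]; rewrite H.
Qed.

Lemma dec_code X (G : hg X) B (v : 'I_(nv G)) j : j < B -> j < arv G v ->
  dec G B (code B v j) = port G v j.
Proof.
by move=> jB ja; rewrite /dec code_div // code_mod // valK ja.
Qed.

Lemma dec_bound X (G : hg X) B a :
  (forall v j, j < arv G v -> port G v j < ari G) -> 0 < ari G -> dec G B a < ari G.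
Proof.
move=> Hp H0; rewrite /dec; case: insub => [v|//].
case: ifP => // H; exact: Hp.
Qed.

Lemma final_flat X (arX : X -> nat) (G : hg (hg X)) v s :
  wfVV arX G -> uniq (v :: s) -> (forall u, u \in v :: s) -> is_flat G (final G v s).
Proof.
move=> W Hu Hc.
case: (@Ulist_rep X G (nv G * Bm G) (Bm G) v s Hu) => f [fi fc ft fp].
have fb : bijective f.
  apply: (inj_card_bij fi).
  rewrite -(card_codom fi); apply: subset_leq_card; apply/subsetP => p _.
  case: (fc p (Hc _)) => k <-; exact: codom_f.
split; first by [].
exists f; split => // k.
have pv : forall k i, i < arv (final G v s) k ->
    port (lab G (tag (f k))) (tagged (f k)) i < arv G (tag (f k)).
  move=> k0 i; case: (fp k0) => _ a1 _ _; rewrite /= a1 => Hi.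
  case: W => _ [Hl _]; case: (Hl (tag (f k0))) => <- [_ [_ [Hp _]]]; exact: Hp.
case: (fp k) => l1 a1 p1 e1.
split; first by [].
split; first by [].
split.
  move=> i Hi; rewrite /= p1 dec_code //; last exact: pv.
  exact: leq_trans (pv _ i Hi) (Bm_ge _).
move=> i k' j Hi Hj; apply: edge_clause.
have Hi' := pv _ _ Hi; have Hj' := pv _ _ Hj.
move: Hi Hj; rewrite /= => Hi Hj.
case: (fp k') => _ _ p1' _; rewrite Hi Hj /= e1 p1 p1' Edef_code //.
  exact: leq_trans Hi' (Bm_ge _).
exact: leq_trans Hj' (Bm_ge _).
Qed.

Lemma flat_wf_gen X (arX : X -> nat) (G : hg (hg X)) F :
  wfVV arX G -> is_flat G F ->
  (forall k i k' j, edge F k i k' j -> i < arv F k /\ j < arv F k') -> wfV arX F.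
Proof.
move=> [n0 [Hl [Hp _]]] [a [phi [[g _ d] Hphi]]] He.
split.
  have v0 : 'I_(nv G) := Ordinal n0.
  case: (Hl v0) => _ [n1 _].
  exact: (leq_ltn_trans (leq0n _) (ltn_ord (g (existT _ v0 (Ordinal n1))))).
split.
  move=> k; case: (Hphi k) => -> [-> _]; split => //.
  by case: (Hl (tag (phi k))) => _ [_ [H _]]; case: (H (tagged (phi k))).
split => // k i Hi.
case: (Hphi k) => _ [ea [-> // _]]; rewrite a; apply: Hp.
case: (Hl (tag (phi k))) => <- [_ [_ [H _]]]; apply: H; by rewrite -ea.
Qed.

Lemma final_wf X (arX : X -> nat) (G : hg (hg X)) v s :
  wfVV arX G -> uniq (v :: s) -> (forall u, u \in v :: s) -> wfV arX (final G v s).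
Proof.
move=> W Hu Hc; apply: (flat_wf_gen W (final_flat W Hu Hc)).
case: (@Ulist_rep X G (nv G * Bm G) (Bm G) v s Hu) => f [fi fc ft fp].
move=> k i k' j /=; case/orP; last by case/and3P.
case: (fp k) => _ a1 _ e1; case: (fp k') => _ a1' _ _.
rewrite e1 a1 a1' => /innerP [u [w [w' [-> [-> E]]]]] /=.
case: W => _ [Hl _]; case: (Hl u) => _ [_ [_ [_ H]]]; exact: H E.
Qed.

Definition mk Y S (sh : hg Y) (l : 'I_(nv sh) -> hg S) : hg (hg S) :=
  @HG (hg S) (nv sh) (ari sh) (arv sh) l (edge sh) (port sh).
Arguments mk {Y S} sh l.

Lemma wf_ari_pos S (arS : S -> nat) (g : hg S) : ranked arS -> wfV arS g -> 0 < ari g.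
Proof.
move=> rk [n0 [Hl [Hp _]]].
have v0 : 'I_(nv g) := Ordinal n0.
have h0 : 0 < arv g v0 by rewrite -(Hl v0).1.
exact: (leq_ltn_trans (leq0n _) (Hp v0 0 h0)).
Qed.

Lemma final_R S (arS : S -> nat) (R : hg S -> hg S -> Prop) Y (sh : hg Y)
  (l1 l2 : 'I_(nv sh) -> hg S) (v : 'I_(nv sh)) s :
  equiv_VS arS R -> VR_compatible arS R -> ranked arS ->
  (forall u j, j < arv sh u -> port sh u j < ari sh) ->
  (forall u, R (l1 u) (l2 u) /\ ari (l1 u) = arv sh u) ->
  R (final (mk sh l1) v s) (final (mk sh l2) v s).
Proof.
move=> [_ [_ [_ [RW _]]]] [Cu [Cr Ce]] rk Hp Hl.
have pos : forall u, 0 < arv sh u.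
  move=> u; case: (Hl u) => /RW [w1 _] <-; exact: wf_ari_pos w1.
have Bpos : 0 < Bm sh := leq_trans (pos v) (Bm_ge v).
have Mpos : 0 < nv sh * Bm sh by rewrite muln_gt0 Bpos (leq_ltn_trans (leq0n _) (ltn_ord v)).
rewrite /final.
change (Bm (mk sh l1)) with (Bm sh); change (Bm (mk sh l2)) with (Bm sh).
change (dec (mk sh l1)) with (dec sh); change (dec (mk sh l2)) with (dec sh).
change (Edef (mk sh l1)) with (Edef sh); change (Edef (mk sh l2)) with (Edef sh).
change (ari (mk sh l1)) with (ari sh); change (ari (mk sh l2)) with (ari sh).
change (nv (mk sh l1)) with (nv sh); change (nv (mk sh l2)) with (nv sh).
have Hc : forall u, R (comp (mk sh l1) (nv sh * Bm sh) (Bm sh) u)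
                      (comp (mk sh l2) (nv sh * Bm sh) (Bm sh) u).
  move=> u; case: (Hl u) => Ru au.
  apply: (Cr (ari (l1 u))) => //; first by rewrite au.
  move=> i; rewrite au => Hi; apply: code_lt => //.
  exact: leq_trans Hi (Bm_ge u).
have HU : forall v s, R (Ulist (mk sh l1) (nv sh * Bm sh) (Bm sh) v s)
                         (Ulist (mk sh l2) (nv sh * Bm sh) (Bm sh) v s).
  move=> v0 s0; elim: s0 v0 => [|v1 s1 IH] v0 /=; first exact: Hc.
  apply: Cu; [by rewrite Ulist_ari | exact: Hc | exact: IH].
apply: (Cr (nv sh * Bm sh)) => //.
- move=> i _; apply: dec_bound => //.
  exact: (leq_ltn_trans (leq0n _) (Hp v 0 (pos v))).
- exact: Ulist_ari.
- apply: (Ce (nv sh * Bm sh)) => //; first exact: Edef_bound.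
  exact: Ulist_ari.
Qed.

Lemma psubst_wf S (arS : S -> nat) Xv (arXv : Xv -> nat) (t : hg (hg S + Xv)) eta :
  wf (sum_ar arXv) (sum_ok arS) t ->
  (forall x, wfV arS (eta x) /\ ari (eta x) = arXv x) -> wfVV arS (psubst eta t).
Proof.
move=> [n0 [Hl [Hp He]]] Heta; split => //; split => //.
move=> v /=; case: (Hl v); case: (lab t v) => [g|x] /= <- //.
by case: (Heta x) => W <-.
Qed.

Lemma cover_enum n (v0 : 'I_n) :
  exists (v : 'I_n) (s : seq 'I_n), uniq (v :: s) /\ forall u, u \in v :: s.
Proof.
case E: (enum 'I_n) => [|v s].
  by have := mem_enum 'I_n v0; rewrite E.
exists v, s; split; first by rewrite -E enum_uniq.
by move=> u; rewrite -E mem_enum.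
Qed.

Lemma VR_to_cong S (arS : S -> nat) R :
  ranked arS -> equiv_VS arS R -> VR_compatible arS R -> congruence arS R.
Proof.
move=> rk Req Rc; split => // Xv arXv rkX t Wt eta eta' He He' HR F F' WF WF' fF fF'.
have Req' := Req; case: Req' => Rr [Rs [Rt [RW Ri]]].
have W1 := psubst_wf Wt He; have W2 := psubst_wf Wt He'.
have [v [s [Hu Hc]]] := cover_enum (Ordinal Wt.1).
pose l1 := fun v => match lab t v with inl g => g | inr x => eta x end.
pose l2 := fun v => match lab t v with inl g => g | inr x => eta' x end.
have R12 : R (final (mk t l1) v s) (final (mk t l2) v s).
  apply: (@final_R S arS R _ t l1 l2 v s Req Rc rk).
    by move=> u j Hj; case: Wt => _ [_ [Hp _]]; exact: Hp.
  move=> u; rewrite /l1 /l2; case: Wt => _ [Hl _]; case: (Hl u).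
  case: (lab t u) => [g|x] /= <- Hok; first by split => //; exact: Rr.
  by split => //; case: (He x).
have [w1 [w2 _]] := RW _ _ R12.
have f1 : is_flat (psubst eta t) (final (mk t l1) v s) := final_flat W1 Hu Hc.
have f2 : is_flat (psubst eta' t) (final (mk t l2) v s) := final_flat W2 Hu Hc.
apply: (Rt _ (final (mk t l1) v s)).
  exact: (Ri _ _ WF w1 (flat_unique fF f1 WF w1)).
apply: (Rt _ _ _ R12).
exact: (Ri _ _ w2 WF' (flat_unique f2 fF' w2 WF')).
Qed.

Lemma cong_final S (arS : S -> nat) R Xv (arXv : Xv -> nat) (t : hg (hg S + Xv))
  eta eta' (v : 'I_(nv t)) s :
  congruence arS R -> ranked arXv -> wf (sum_ar arXv) (sum_ok arS) t ->
  (forall x, wfV arS (eta x) /\ ari (eta x) = arXv x) ->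
  (forall x, wfV arS (eta' x) /\ ari (eta' x) = arXv x) ->
  (forall x, R (eta x) (eta' x)) -> uniq (v :: s) -> (forall u, u \in v :: s) ->
  R (final (psubst eta t) v s) (final (psubst eta' t) v s).
Proof.
move=> [_ C] rkX Wt He He' HR Hu Hc.
have W1 := psubst_wf Wt He; have W2 := psubst_wf Wt He'.
apply: (C Xv arXv rkX t Wt eta eta' He He' HR).
- exact: final_wf W1 Hu Hc.
- exact: final_wf W2 Hu Hc.
- exact: final_flat W1 Hu Hc.
- exact: final_flat W2 Hu Hc.
Qed.

Lemma dunion_wf S (arS : S -> nat) (G H : hg S) :
  wfV arS G -> wfV arS H -> ari G = ari H -> wfV arS (dunion G H).
Proof.
move=> [g0 [gl [gp ge]]] [h0 [hl [hp he]]] e; split; first by rewrite addn_gt0 g0.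
split; first by move=> k /=; case: (split k).
split; first by move=> k i /=; case: (split k) => w Hi; [exact: gp | rewrite e; exact: hp].
move=> k i k' j /=; case: (split k) => w; case: (split k') => w' //; [exact: ge|exact: he].
Qed.

Lemma rename_wf S (arS : S -> nat) (G : hg S) m f :
  wfV arS G -> (forall i, i < ari G -> f i < m) -> wfV arS (rename_ports m f G).
Proof.
move=> [g0 [gl [gp ge]]] Hf; split => //; split => //; split => // k i Hi /=.
exact/Hf/gp.
Qed.

Lemma add_edges_wf S (arS : S -> nat) (G : hg S) E :
  wfV arS G -> wfV arS (add_edges E G).
Proof.
move=> [g0 [gl [gp ge]]]; split => //; split => //; split => // k i k' j /=.
by case/orP => [/ge|/and3P [-> ->]].
Qed.

Definition tD (S : Type) n : hg (hg S + bool) :=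
  @HG (hg S + bool) 2 n (fun _ => n) (fun v => inr (val v == 1))
      (fun _ _ _ _ => false) (fun _ i => i).
Definition etaD S (G H : hg S) (b : bool) := if b then H else G.

Lemma hiso_dunion S (arS : S -> nat) (G H : hg S) :
  wfV arS G -> wfV arS H -> ari G = ari H ->
  hiso (dunion G H) (final (psubst (etaD G H) (tD S (ari G))) ord0 [:: ord_max]).
Proof.
move=> [_ [_ [gp _]]] [_ [_ [hp _]]] e.
split; first by [].
exists (fun k => k); split; first by exists id.
move=> k; split; first by [].
split; first by [].
split.
  move=> i /=; case: (split k) => w Hi /=.
    have pl := gp w i Hi.
    rewrite (@dec_code _ (psubst (etaD G H) (tD S (ari G))) _ ord0) //.
    exact: leq_trans pl (@Bm_ge _ (psubst (etaD G H) (tD S (ari G))) ord0).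
  have pl : port H w i < ari G by rewrite e; exact: hp.
  rewrite (@dec_code _ (psubst (etaD G H) (tD S (ari G))) _ ord_max) //.
  exact: leq_trans pl (@Bm_ge _ (psubst (etaD G H) (tD S (ari G))) ord_max).
move=> i k' j /=.
rewrite Edef_false ?andbF ?orbF //.
Qed.

Definition tR (S : Type) n m (f : nat -> nat) : hg (hg S + unit) :=
  @HG (hg S + unit) 1 m (fun _ => n) (fun _ => inr tt)
      (fun _ _ _ _ => false) (fun _ i => f i).

Lemma hiso_rename S (arS : S -> nat) (G : hg S) n m f :
  wfV arS G -> ari G = n ->
  hiso (rename_ports m f G) (final (psubst (fun _ => G) (tR S n m f)) ord0 [::]).
Proof.
move=> [_ [_ [gp _]]] e.
split; first by [].
exists (fun k => k); split; first by exists id.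
move=> k; split; first by [].
split; first by [].
split.
  move=> i /= Hi.
  have pl : port G k i < n by rewrite -e; exact: gp.
  rewrite (@dec_code _ (psubst (fun _ => G) (tR S n m f)) _ ord0) //.
  exact: leq_trans pl (@Bm_ge _ (psubst (fun _ => G) (tR S n m f)) ord0).
move=> i k' j /=.
rewrite Edef_false ?andbF ?orbF //.
Qed.

Definition tE (S : Type) n (E : rel nat) : hg (hg S + unit) :=
  @HG (hg S + unit) 1 n (fun _ => n) (fun _ => inr tt)
      (fun _ i _ j => E i j) (fun _ i => i).

Lemma hiso_add S (arS : S -> nat) (G : hg S) n E :
  wfV arS G -> ari G = n ->
  hiso (add_edges E G) (final (psubst (fun _ => G) (tE S n E)) ord0 [::]).
Proof.
move=> [_ [_ [gp _]]] e.
have Bn : n <= Bm (psubst (fun _ => G) (tE S n E)).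
  exact: (@Bm_ge _ (psubst (fun _ => G) (tE S n E)) ord0).
split; first by [].
exists (fun k => k); split; first by exists id.
move=> k; split; first by [].
split; first by [].
split.
  move=> i /= Hi.
  have pl : port G k i < n by rewrite -e; exact: gp.
  rewrite (@dec_code _ (psubst (fun _ => G) (tE S n E)) _ ord0) //.
  exact: leq_trans pl Bn.
move=> i k' j /=.
case Hi: (i < arv G k); case Hj: (j < arv G k') => //=.
have pl : port G k i < n by rewrite -e; exact: gp.
have pl' : port G k' j < n by rewrite -e; exact: gp.
rewrite (@Edef_code _ (psubst (fun _ => G) (tE S n E)) _ ord0 ord0) //.
  exact: leq_trans pl Bn.
exact: leq_trans pl' Bn.
Qed.

Lemma cover1 (u : 'I_1) : u \in [:: ord0].
Proof. by rewrite inE; apply/eqP/val_inj; case: u => [[]]. Qed.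
Lemma cover2 (u : 'I_2) : u \in [:: ord0; ord_max].
Proof.
rewrite !inE; case: u => [[|[|//]]] p; apply/orP; [left|right]; exact/eqP/val_inj.
Qed.

Lemma cong_to_VR S (arS : S -> nat) R :
  ranked arS -> congruence arS R -> VR_compatible arS R.
Proof.
move=> rk Rc; have [Req _] := Rc; have [Rr [Rs [Rt [RW Ri]]]] := Req.
split; [|split].
- move=> G G' H H' eGH RG RH.
  have [wG [wG' eG]] := RW _ _ RG; have [wH [wH' eH]] := RW _ _ RH.
  have n0 := wf_ari_pos rk wG.
  have R12 : R (final (psubst (etaD G H) (tD S (ari G))) ord0 [:: ord_max])
               (final (psubst (etaD G' H') (tD S (ari G))) ord0 [:: ord_max]).
    apply: (@cong_final S arS R bool (fun _ => ari G)) => //.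
    - by case => /=; split => //; rewrite eGH.
    - by case => /=; split => //; rewrite -?eH -?eG ?eGH.
    - by case.
    - exact: cover2.
  have [w1 [w2 _]] := RW _ _ R12.
  apply: (Rt _ _ _ _ (Rt _ _ _ R12 _)).
    exact: Ri (dunion_wf wG wH eGH) w1 (hiso_dunion wG wH eGH).
  apply: Rs; apply: Ri (dunion_wf wG' wH' _) w2 _.
    by rewrite -eG -eH.
  rewrite eG; apply: hiso_dunion wG' wH' _; by rewrite -eG -eH.
- move=> n m f n0 Hf G G' eG RG.
  have [wG [wG' eG']] := RW _ _ RG.
  have R12 : R (final (psubst (fun _ => G) (tR S n m f)) ord0 [::])
               (final (psubst (fun _ => G') (tR S n m f)) ord0 [::]).
    apply: (@cong_final S arS R unit (fun _ => n)) => //.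
    - by move=> _; split => //; rewrite -eG'.
    - exact: cover1.
  have [w1 [w2 _]] := RW _ _ R12.
  have wr : wfV arS (rename_ports m f G) by apply: (rename_wf wG); rewrite eG.
  have wr' : wfV arS (rename_ports m f G') by apply: (rename_wf wG'); rewrite -eG' eG.
  apply: (Rt _ _ _ _ (Rt _ _ _ R12 _)).
    exact: Ri wr w1 (hiso_rename m f wG eG).
  apply: Rs; apply: Ri wr' w2 (hiso_rename m f wG' _).
  by rewrite -eG'.
- move=> n E n0 HE G G' eG RG.
  have [wG [wG' eG']] := RW _ _ RG.
  have R12 : R (final (psubst (fun _ => G) (tE S n E)) ord0 [::])
               (final (psubst (fun _ => G') (tE S n E)) ord0 [::]).
    apply: (@cong_final S arS R unit (fun _ => n)) => //.
    - split; first by []. split; first by []. split; first by []. by move=> v i w j /= /HE.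
    - by move=> _; split => //; rewrite -eG'.
    - exact: cover1.
  have [w1 [w2 _]] := RW _ _ R12.
  apply: (Rt _ _ _ _ (Rt _ _ _ R12 _)).
    exact: Ri (add_edges_wf _ wG) w1 (hiso_add E wG eG).
  apply: Rs; apply: Ri (add_edges_wf _ wG') w2 (hiso_add E wG' _).
  by rewrite -eG'.
Qed.

From Stdlib Require Import List.

Lemma alg_to_cong S (arS : S -> nat) (L : hg S -> Prop) :
  rec_by_finite_algebra arS L -> rec_by_finite_congruence arS L.
Proof.
case=> A [arA [pi [rkA [finA [Valg [h [Fp [hom HLF]]]]]]]].
have [hA [hiso_h hflat]] := hom.
exists (fun G H => wfV arS G /\ wfV arS H /\ ari G = ari H /\ h G = h H).
split; [split; [split|] | split].
- by move=> G WG; split; [|split; [|split]].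
- split; first by move=> G H [? [? [? ?]]]; split; [|split; [|split]].
  split; first by move=> G H K [? [? [e1 h1]]] [? [? [e2 h2]]];
    split; [|split; [|split]] => //; [rewrite e1 | rewrite h1].
  split; first by move=> G H [? [? [? ?]]].
  move=> G H WG WH HGH; split; [|split; [|split]] => //; [exact: HGH.1 | exact: hiso_h].
- move=> Xv arXv _ t Wt eta eta' He He' HR F F' WF WF' fF fF'.
  split; [|split; [|split]] => //; first by rewrite fF.1 fF'.1.
  rewrite (hflat _ _ (psubst_wf Wt He) WF fF) (hflat _ _ (psubst_wf Wt He') WF' fF').
  congr pi; rewrite /psubst /Vmap /=; congr HG.
  apply: functional_extensionality => v; case: (lab t v) => // x.
  by case: (HR x) => _ [_ [_ ->]].
- move=> n; case: (finA n) => l Hl.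
  case: (classic (exists G0, wfV arS G0 /\ ari G0 = n)) => [[G0 _]|nE]; last first.
    by exists nil => G WG aG; exfalso; apply: nE; exists G.
  pose pick a := epsilon (inhabits G0) (fun G => wfV arS G /\ ari G = n /\ h G = a).
  exists (map pick l) => G WG aG.
  exists (pick (h G)); split.
    by apply: in_map; apply: Hl; rewrite hA // aG.
  have [W' [a' h']] := epsilon_spec (inhabits G0)
     (fun G' => wfV arS G' /\ ari G' = n /\ h G' = h G) (ex_intro _ G (conj WG (conj aG erefl))).
  by split; [|split; [|split]] => //; rewrite ?aG ?a' ?h'.
- move=> G H WG WH aG [_ [_ [aGH hGH]]] LG.
  have aH : ari H = 1 by rewrite -aGH.
  apply/(HLF H WH aH); rewrite -hGH; exact/(HLF G WG aG).
Qed.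

Definition clsT S (arS : S -> nat) (R : hg S -> hg S -> Prop) :=
  {P : hg S -> Prop | exists G, wfV arS G /\ P = R G}.

Definition repc S (arS : S -> nat) R (g0 : hg S) (a : clsT arS R) : hg S :=
  epsilon (inhabits g0) (fun G => wfV arS G /\ sval a = R G).

Definition clsc S (arS : S -> nat) R (g0 : hg S) (W0 : wfV arS g0) (G : hg S)
  : clsT arS R :=
  match excluded_middle_informative (wfV arS G) with
  | left W => exist _ (R G) (ex_intro _ G (conj W erefl))
  | right _ => exist _ (R g0) (ex_intro _ g0 (conj W0 erefl))
  end.

Lemma repc_spec S (arS : S -> nat) R g0 (a : clsT arS R) :
  wfV arS (repc g0 a) /\ sval a = R (repc g0 a).
Proof.
rewrite /repc; case: a => P HP /=.
exact: (epsilon_spec (inhabits g0) (fun G => wfV arS G /\ P = R G) HP).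
Qed.

Lemma clsc_wf S (arS : S -> nat) R g0 (W0 : wfV arS g0) G :
  wfV arS G -> sval (clsc R W0 G) = R G.
Proof. by move=> W; rewrite /clsc; case: excluded_middle_informative. Qed.

Lemma clsT_eq S (arS : S -> nat) R (a b : clsT arS R) : sval a = sval b -> a = b.
Proof.
case: a b => [P p] [Q q] /= e; subst Q; f_equal; exact: proof_irrelevance.
Qed.

Lemma R_fun S (arS : S -> nat) R : equiv_VS arS R -> forall G H, R G H -> R G = R H.
Proof.
move=> [_ [Rs [Rt _]]] G H RGH; apply: functional_extensionality => K.
apply: propositional_extensionality; split => HK.
  exact: (Rt _ _ _ (Rs _ _ RGH) HK).
exact: (Rt _ _ _ RGH HK).
Qed.

Lemma clsc_eq S (arS : S -> nat) R g0 (W0 : wfV arS g0) G H :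
  equiv_VS arS R -> R G H -> clsc R W0 G = clsc R W0 H.
Proof.
move=> Req RGH; have [WG [WH _]] := Req.2.2.2.1 _ _ RGH.
by apply: clsT_eq; rewrite !clsc_wf //; exact: (R_fun Req RGH).
Qed.

Lemma clsc_rep S (arS : S -> nat) R g0 (W0 : wfV arS g0) a :
  clsc R W0 (repc g0 a) = a.
Proof.
have [W e] := repc_spec g0 a.
by apply: clsT_eq; rewrite clsc_wf.
Qed.

Lemma R_rep_cls S (arS : S -> nat) R g0 (W0 : wfV arS g0) G :
  equiv_VS arS R -> wfV arS G -> R (repc g0 (clsc R W0 G)) G.
Proof.
move=> Req W; have [_ e] := repc_spec g0 (clsc R W0 G).
rewrite clsc_wf // in e; rewrite -e; exact: Req.1.
Qed.

Definition arc S (arS : S -> nat) R g0 (a : clsT arS R) := ari (repc g0 a).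
Definition pic S (arS : S -> nat) R g0 (W0 : wfV arS g0) (K : hg (clsT arS R))
  : clsT arS R := clsc R W0 (flat (Vmap (repc g0) K)).

Lemma ari_cls S (arS : S -> nat) R g0 (W0 : wfV arS g0) G :
  equiv_VS arS R -> wfV arS G -> ari (repc g0 (clsc R W0 G)) = ari G.
Proof.
move=> Req W; have := R_rep_cls W0 Req W.
by move/(Req.2.2.2.1) => [_ [_ ->]].
Qed.

Lemma wfVV_rep S (arS : S -> nat) R g0 (K : hg (clsT arS R)) :
  wfV (@arc S arS R g0) K -> wfVV arS (Vmap (repc g0) K).
Proof.
move=> [n0 [Hl [Hp He]]]; split => //; split => //.
move=> v /=; split; first exact: (Hl v).1.
exact: (repc_spec g0 (lab K v)).1.
Qed.

Lemma arc_ranked S (arS : S -> nat) R g0 :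
  ranked arS -> ranked (@arc S arS R g0).
Proof. move=> rk a; exact: wf_ari_pos rk (repc_spec g0 a).1. Qed.

Lemma ari_pic S (arS : S -> nat) R g0 (W0 : wfV arS g0) K :
  equiv_VS arS R -> wfV (@arc S arS R g0) K -> arc g0 (pic W0 K) = ari K.
Proof.
move=> Req W; rewrite /arc /pic ari_cls //.
exact: flat_wf (wfVV_rep W).
Qed.

Lemma pic_flat S (arS : S -> nat) R g0 (W0 : wfV arS g0) (G : hg (hg (clsT arS R))) F :
  ranked arS -> congruence arS R ->
  wfVV (@arc S arS R g0) G -> wfV (@arc S arS R g0) F -> is_flat G F ->
  pic W0 (Vmap (pic W0) G) = pic W0 F.
Proof.
move=> rk [Req Rc] WG WF fG.
apply: clsc_eq => //.
case: G WG fG => nG aG arvG labG eG pG WG fG.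
have [n0 [Hl [Hp He]]] := WG.
pose t := @HG (hg S + 'I_nG) nG aG arvG (fun v => inr v) eG pG.
pose eta v := repc g0 (pic W0 (labG v)).
pose eta' v := flat (Vmap (repc g0) (labG v)).
have Wt : wf (sum_ar arvG) (sum_ok arS) t by split => //; split.
have wl : forall v, wfV arS (eta' v).
  move=> v; apply: flat_wf; apply: wfVV_rep; exact: (Hl v).2.
have He1 : forall x, wfV arS (eta x) /\ ari (eta x) = arvG x.
  move=> x; split; first exact: (repc_spec g0 _).1.
  rewrite /eta /pic ari_cls //; [exact: (Hl x).1 | exact: wl].
have He2 : forall x, wfV arS (eta' x) /\ ari (eta' x) = arvG x.
  by move=> x; split; [exact: wl | exact: (Hl x).1].
have rkX : ranked arvG.
  by move=> v; move: (wf_ari_pos (@arc_ranked S arS R g0 rk) (Hl v).2); rewrite (Hl v).1.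
apply: (Rc 'I_nG arvG rkX t Wt eta eta' He1 He2).
- by move=> x; apply: R_rep_cls.
- exact: flat_wf (psubst_wf Wt He1).
- exact: flat_wf (wfVV_rep WF).
- exact: flat_is_flat.
- have Hm : forall x, wfV arS (repc g0 x) /\ ari (repc g0 x) = @arc S arS R g0 x.
    by move=> x; split; [exact: (repc_spec g0 x).1 | by []].
  exact: (@flat_assoc _ S (@arc S arS R g0) arS (repc g0)
            (@HG _ nG aG arvG labG eG pG) F Hm WF fG).
Qed.

Lemma cong_to_alg S (arS : S -> nat) (L : hg S -> Prop) :
  ranked arS -> rec_by_finite_congruence arS L -> rec_by_finite_algebra arS L.
Proof.
move=> HS [R [Rc [Rfin Runion]]].
have [Req Rcg] := Rc; have [Rr [Rs [Rt [RW Ri]]]] := Req.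
case: (classic (inhabited S)) => [[s0]|nS]; last first.
  have rkn : ranked (fun n : nat => n.+1) by move=> n.
  exists nat, (fun n => n.+1), (fun G : hg nat => (ari G).-1).
  split; first by [].
  split; first by move=> n; exists [:: n.-1] => a <-; left.
  split.
    split; first by move=> G W; rewrite prednK //; exact: wf_ari_pos rkn W.
    split; first by move=> G H _ _ [e _]; rewrite e.
    split; first by [].
    by move=> G F _ _ [e _]; rewrite /= e.
  exists (fun G : hg S => (ari G).-1), (fun _ => False).
  split.
    split; first by move=> G W; rewrite prednK //; exact: wf_ari_pos HS W.
    split; first by move=> G H _ _ [e _]; rewrite e.
    by move=> G F _ _ [e _]; rewrite /= e.
  move=> G [n0 _] _; split => // _; exfalso; apply: nS.
  exact: inhabits (lab G (Ordinal n0)).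
pose g0 := hunit arS s0.
have W0 : wfV arS g0 by split => //; split => //; split.
exists (clsT arS R), (@arc S arS R g0), (pic W0).
split; first exact: arc_ranked.
split.
  move=> n; case: (Rfin n) => l Hl; exists (map (clsc R W0) l) => a ea.
  have [Wa _] := repc_spec g0 a.
  case: (Hl _ Wa ea) => H [inH RaH].
  rewrite -(clsc_rep W0 a) (clsc_eq W0 Req RaH); exact: in_map.
split.
  split; first by move=> K W; exact: ari_pic.
  split.
    move=> K1 K2 W1 W2 I12.
    have WU : wfVV (@arc S arS R g0) (hunit (@ari _) K1).
      split => //; split => //; split => //.
    rewrite -(pic_flat W0 HS Rc WU W1 (unit_flat (hiso_refl K1))).
    exact: (pic_flat W0 HS Rc WU W2 (unit_flat I12)).
  split.
    move=> a; rewrite /pic.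
    change (Vmap (repc g0) (hunit (@arc S arS R g0) a)) with (hunit (@ari S) (repc g0 a)).
    have Wr := (repc_spec g0 a).1.
    have WU : wfVV arS (hunit (@ari S) (repc g0 a)) by split => //; split => //; split.
    rewrite -[RHS](clsc_rep W0 a); apply: (clsc_eq W0 Req).
    exact: (Ri _ _ (flat_wf WU) Wr
      (flat_unique (flat_is_flat _) (unit_flat (hiso_refl _)) (flat_wf WU) Wr)).
  move=> G F WG WF fG; exact: pic_flat.
exists (clsc R W0), (fun a => L (repc g0 a)).
split.
  split; first by move=> G W; exact: ari_cls.
  split; first by move=> G H WG WH I; apply: (clsc_eq W0 Req); exact: Ri.
  move=> G F WG WF fG; rewrite /pic; apply: (clsc_eq W0 Req).
  case: G WG fG => nG aG arvG labG eG pG WG fG.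
  have [n0 [Hl [Hp He]]] := WG.
  pose t := @HG (hg S + 'I_nG) nG aG arvG (fun v => inr v) eG pG.
  pose eta v := labG v.
  pose eta' v := repc g0 (clsc R W0 (labG v)).
  have Wt : wf (sum_ar arvG) (sum_ok arS) t by split => //; split.
  have He1 : forall x, wfV arS (eta x) /\ ari (eta x) = arvG x.
    by move=> x; split; [exact: (Hl x).2 | exact: (Hl x).1].
  have He2 : forall x, wfV arS (eta' x) /\ ari (eta' x) = arvG x.
    move=> x; split; first exact: (repc_spec g0 _).1.
    rewrite /eta' ari_cls //; [exact: (Hl x).1 | exact: (Hl x).2].
  have rkX : ranked arvG.
    by move=> v; move: (wf_ari_pos HS (Hl v).2); rewrite (Hl v).1.
  apply: (Rcg 'I_nG arvG rkX t Wt eta eta' He1 He2).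
  - by move=> x; exact: (Rs _ _ (R_rep_cls W0 Req (Hl x).2)).
  - exact: WF.
  - exact: flat_wf (psubst_wf Wt He2).
  - exact: fG.
  - exact: flat_is_flat.
move=> G WG aG; have Wr := (repc_spec g0 (clsc R W0 G)).1.
have RG := R_rep_cls W0 Req WG.
split => LG.
  exact: (Runion G _ WG Wr aG (Rs _ _ RG) LG).
apply: (Runion _ G Wr WG _ RG LG).
by rewrite ari_cls.
Qed.


Theorem theorem5p7 (S : Type) (arS : S -> nat) (HS : ranked arS)
  (L : hg S -> Prop)
  (HL : forall G, L G -> wfV arS G /\ ari G = 1)
  (HLiso : forall G H, L G -> wfV arS H -> hiso G H -> L H) :
  (rec_by_finite_algebra arS L <-> rec_by_finite_congruence arS L) /\
  (rec_by_finite_congruence arS L <-> VR_recognisable arS L).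
Proof.
split; split.
- exact: alg_to_cong.
- exact: cong_to_alg HS.
- case=> R [Rc [Rf Ru]]; exists R; split; first exact: Rc.1.
  split; first exact: cong_to_VR HS Rc.
  by split.
- case=> R [Req [Rvr [Rf Ru]]]; exists R; split; first exact: VR_to_cong HS Req Rvr.
  by split.
Qed.
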